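(* Let $G=(V,E,\mu,\omega)$ be a weighted graph with a fixed reference vertex $p\in V$, and suppose there exist constants $D>0$ and $0\le\alpha\le2$ such that $\mathrm{Deg}(x)\le D\,d(x,p)^{\alpha}$ for all $x\in V$, $x\ne p$. Let $T\in(0,\infty]$ and let $u\in C^2_t([0,T)\times V)$ satisfy the homogeneous wave equation $\partial_t^2u(t,x)=\Delta u(t,x)$ for all $(t,x)\in[0,T)\times V$ (the time derivative at $t=0$ being one-sided). Suppose that for some $C>0$ and $A_1\in[0,2-\alpha]$, $$|u(t,x)|\le C\,d(x,p)^{A_1 d(x,p)}\quad\text{for all }(t,x)\in[0,T)\times V,\ x\ne p.$$ Then for every $x\in V$, the function $t\mapsto u(t,x)$ is real analytic on $[0,T)$, with radius of analyticity $r$ (i.e. for every $t_0\in[0,T)$ the Taylor series of $u(\cdot,x)$ at $t_0$ converges to $u(t,x)$ for all $t\in[0,T)$ with $|t-t_0|<r$) satisfying $r=+\infty$ if $A_1<2-\alpha$, and $r\ge\frac1e\sqrt{\frac{2}{D}}$ if $A_1=2-\alpha$.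
   Context: A weighted graph $G=(V,E,\mu,\omega)$ consists of a locally finite, connected, simple, undirected graph $(V,E)$, a symmetric edge weight $\omega:E\to(0,\infty)$, $\{x,y\}\mapsto\omega_{xy}=\omega_{yx}$, and a vertex weight $\mu:V\to(0,\infty)$. Write $x\sim y$ if $\{x,y\}\in E$; $d(x,y)$ is the combinatorial graph distance. The Laplacian is $\Delta f(x)=\sum_{y\sim x}\frac{\omega_{xy}}{\mu_x}(f(y)-f(x))$ for $f:V\to\mathbb{R}$, and the weighted degree is $\mathrm{Deg}(x)=\sum_{y\sim x}\frac{\omega_{xy}}{\mu_x}$. For an interval $I$ and $k\in\mathbb{N}_0\cup\{\infty\}$, $u\in C^k_t(I\times V)$ means $u:I\times V\to\mathbb{R}$ and $u(\cdot,x)\in C^k(I)$ for every $x\in V$; $\Delta$ acts in the space variable. *)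

(* Defs.v *)
From Stdlib Require Import Reals List.
From Coquelicot Require Import Coquelicot.
Open Scope R_scope.

Section Graph.
Context {V : Type}.

(* A locally finite simple undirected graph is given by its neighbour lists:
   nbrs x lists (without repetition) exactly the neighbours of x. *)
Inductive walk (nbrs : V -> list V) : nat -> V -> V -> Prop :=
| walk0 x : walk nbrs 0 x x
| walkS n x y z : In y (nbrs x) -> walk nbrs n y z -> walk nbrs (S n) x z.

Definition simple_graph (nbrs : V -> list V) : Prop :=
  (forall x, NoDup (nbrs x)) /\
  (forall x, ~ In x (nbrs x)) /\
  (forall x y, In y (nbrs x) -> In x (nbrs y)).

Definition connected (nbrs : V -> list V) : Prop :=
  forall x y, exists n, walk nbrs n x y.

Definition weights_ok (nbrs : V -> list V) (w : V -> V -> R) (mu : V -> R) : Prop :=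
  (forall x y, In y (nbrs x) -> w x y = w y x /\ 0 < w x y) /\
  (forall x, 0 < mu x).

Definition is_dist_to (nbrs : V -> list V) (p : V) (d : V -> nat) : Prop :=
  forall x, walk nbrs (d x) x p /\ (forall m, walk nbrs m x p -> (d x <= m)%nat).

Definition lap (nbrs : V -> list V) (w : V -> V -> R) (mu : V -> R)
  (f : V -> R) (x : V) : R :=
  fold_right Rplus 0 (map (fun y => w x y / mu x * (f y - f x)) (nbrs x)).

Definition Deg (nbrs : V -> list V) (w : V -> V -> R) (mu : V -> R) (x : V) : R :=
  fold_right Rplus 0 (map (fun y => w x y / mu x) (nbrs x)).

End Graph.

Definition Itime (T : Rbar) (t : R) : Prop := 0 <= t /\ Rbar_lt t T.

Definition is_deriv_within (S : R -> Prop) (f : R -> R) (t l : R) : Prop :=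
  forall eps, 0 < eps -> exists delta, 0 < delta /\
    forall h, h <> 0 -> Rabs h < delta -> S (t + h) ->
      Rabs ((f (t + h) - f t) / h - l) < eps.

Definition cont_within (S : R -> Prop) (f : R -> R) (t : R) : Prop :=
  forall eps, 0 < eps -> exists delta, 0 < delta /\
    forall s, Rabs (s - t) < delta -> S s -> Rabs (f s - f t) < eps.

Definition C2_with (S : R -> Prop) (f f1 f2 : R -> R) : Prop :=
  forall t, S t ->
    is_deriv_within S f t (f1 t) /\ is_deriv_within S f1 t (f2 t) /\
    cont_within S f2 t.

Definition analytic_radius (I : R -> Prop) (f : R -> R) (r : Rbar) : Prop :=
  exists fn : nat -> R -> R,
    (forall t, fn 0%nat t = f t) /\
    (forall n t, I t -> is_deriv_within I (fn n) t (fn (S n) t)) /\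
    (forall t0 t, I t0 -> I t -> Rbar_lt (Rabs (t - t0)) r ->
       is_series (fun n => fn n t0 / INR (Factorial.fact n) * (t - t0) ^ n) (f t)).

(* Main.v *)
Require Import Defs.
From Stdlib Require Import Reals List Lia Lra Classical FunctionalExtensionality.
From Coquelicot Require Import Coquelicot.
Open Scope R_scope.
Notation fact := Factorial.fact.


Lemma idw_sub (S S' : R -> Prop) f t l :
  (forall s, S' s -> S s) -> is_deriv_within S f t l -> is_deriv_within S' f t l.
Proof.
  intros HS H eps He. destruct (H eps He) as [d [Hd Hh]]. exists d; split; auto.
Qed.

Lemma idw_ext (S : R -> Prop) f g t l :
  (forall s, S s -> f s = g s) -> S t -> is_deriv_within S f t l -> is_deriv_within S g t l.
Proof.
  intros Hfg Ht H eps He. destruct (H eps He) as [d [Hd Hh]]. exists d; split; auto.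
  intros h H1 H2 H3. rewrite <- !Hfg; auto.
Qed.

Lemma idw_plus S f g t l1 l2 :
  is_deriv_within S f t l1 -> is_deriv_within S g t l2 ->
  is_deriv_within S (fun s => f s + g s) t (l1 + l2).
Proof.
  intros H1 H2 eps He.
  destruct (H1 (eps/2)) as [d1 [Hd1 Hh1]]; [lra|].
  destruct (H2 (eps/2)) as [d2 [Hd2 Hh2]]; [lra|].
  exists (Rmin d1 d2); split; [apply Rmin_pos; auto|].
  intros h Hh0 Hh HS.
  assert (A1 := Hh1 h Hh0 (Rlt_le_trans _ _ _ Hh (Rmin_l _ _)) HS).
  assert (A2 := Hh2 h Hh0 (Rlt_le_trans _ _ _ Hh (Rmin_r _ _)) HS).
  replace ((f (t + h) + g (t + h) - (f t + g t)) / h - (l1 + l2)) with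
    (((f (t + h) - f t) / h - l1) + ((g (t + h) - g t) / h - l2)) by (field; auto).
  eapply Rle_lt_trans; [apply Rabs_triang|]. lra.
Qed.

Lemma idw_scal S f t l c :
  is_deriv_within S f t l -> is_deriv_within S (fun s => c * f s) t (c * l).
Proof.
  intros H eps He.
  destruct (H (eps / (Rabs c + 1))) as [d [Hd Hh]].
  { apply Rdiv_lt_0_compat; auto. pose proof (Rabs_pos c); lra. }
  exists d; split; auto. intros h H0 H1 H2.
  replace ((c * f (t + h) - c * f t) / h - c * l) with (c * ((f (t + h) - f t) / h - l)) by (field; auto).
  rewrite Rabs_mult. pose proof (Hh h H0 H1 H2). pose proof (Rabs_pos c).
  pose proof (Rabs_pos ((f (t + h) - f t) / h - l)).
  apply Rle_lt_trans with ((Rabs c + 1) * Rabs ((f (t + h) - f t) / h - l)).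
  nra.
  replace eps with ((Rabs c + 1) * (eps / (Rabs c + 1))) by (field; lra).
  apply Rmult_lt_compat_l; lra.
Qed.

Lemma idw_opp S f t l :
  is_deriv_within S f t l -> is_deriv_within S (fun s => - f s) t (- l).
Proof.
  intros H. pose proof (idw_scal S f t l (-1) H).
  intros eps He. destruct (H0 eps He) as [d [Hd Hh]]. exists d; split; auto.
  intros h A B C'. specialize (Hh h A B C'). replace (- f (t + h) - - f t) with (-1 * f (t+h) - -1 * f t) by ring.
  replace (-l) with (-1*l) by ring. auto.
Qed.

Lemma idw_minus S f g t l1 l2 :
  is_deriv_within S f t l1 -> is_deriv_within S g t l2 ->
  is_deriv_within S (fun s => f s - g s) t (l1 - l2).
Proof.
  intros H1 H2. apply idw_plus; auto. apply idw_opp; auto.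
Qed.

Lemma idw_const S c t : is_deriv_within S (fun _ => c) t 0.
Proof.
  intros eps He. exists 1; split; [lra|]. intros h H0 _ _.
  replace ((c - c) / h - 0) with 0 by (field; auto). rewrite Rabs_R0; lra.
Qed.

Lemma idw_of_derive S f t l : is_derive f t l -> is_deriv_within S f t l.
Proof.
  intros H. apply is_derive_Reals in H. intros eps He.
  destruct (H eps He) as [d Hd]. exists d; split; [apply cond_pos|].
  intros h H0 H1 _. apply Hd; auto.
Qed.

Lemma idw_cont S f t l : is_deriv_within S f t l -> cont_within S f t.
Proof.
  intros H eps He. destruct (H 1 Rlt_0_1) as [d [Hd Hh]].
  exists (Rmin d (eps / (Rabs l + 1))); split.
  { apply Rmin_pos; auto. apply Rdiv_lt_0_compat; auto. pose proof (Rabs_pos l); lra. }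
  intros s Hs HSs.
  destruct (Req_dec s t) as [->|Hne].
  { replace (f t - f t) with 0 by ring. rewrite Rabs_R0; lra. }
  set (h := s - t).
  assert (Hh0 : h <> 0) by (unfold h; lra).
  assert (Hs' : t + h = s) by (unfold h; ring).
  specialize (Hh h Hh0). rewrite Hs' in Hh.
  assert (Hhd : Rabs h < d) by (eapply Rlt_le_trans; [apply Hs| apply Rmin_l]).
  specialize (Hh Hhd HSs).
  assert (E : f s - f t = h * ((f s - f t) / h - l) + h * l) by (field; auto).
  rewrite E. eapply Rle_lt_trans; [apply Rabs_triang|]. rewrite !Rabs_mult.
  assert (Hhe : Rabs h < eps / (Rabs l + 1)) by (eapply Rlt_le_trans; [apply Hs| apply Rmin_r]).
  pose proof (Rabs_pos h). pose proof (Rabs_pos l).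
  pose proof (Rabs_pos ((f s - f t) / h - l)).
  apply Rle_lt_trans with (Rabs h * (Rabs l + 1)).
  nra.
  apply Rmult_lt_reg_r with (/ (Rabs l + 1)). apply Rinv_0_lt_compat; lra.
  replace (Rabs h * (Rabs l + 1) * / (Rabs l + 1)) with (Rabs h) by (field; lra).
  exact Hhe.
Qed.


Definition clamp a b s := Rmax a (Rmin b s).

Lemma clamp_in a b s : a <= b -> a <= clamp a b s <= b.
Proof. intros. unfold clamp, Rmax, Rmin. repeat destruct Rle_dec; lra. Qed.
Lemma clamp_id a b s : a <= s <= b -> clamp a b s = s.
Proof. intros. unfold clamp, Rmax, Rmin. repeat destruct Rle_dec; lra. Qed.
Lemma clamp_lip a b s x : a <= x <= b -> Rabs (clamp a b s - x) <= Rabs (s - x).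
Proof. intros. unfold clamp, Rmax, Rmin. repeat destruct Rle_dec; unfold Rabs; repeat destruct Rcase_abs; lra. Qed.

Lemma clamp_cont a b f x : a <= b -> a <= x <= b ->
  cont_within (fun s => a <= s <= b) f x -> continuity_pt (fun s => f (clamp a b s)) x.
Proof.
  intros Hab Hx H eps He. destruct (H eps He) as [d [Hd Hh]].
  exists d; split; auto. intros s [_ Hs]. simpl in *. unfold R_dist in *.
  rewrite (clamp_id a b x Hx). apply Hh. eapply Rle_lt_trans; [apply clamp_lip; auto|]. auto.
  apply clamp_in; auto.
Qed.

Lemma mono_lemma a b f f' : a <= b ->
  (forall s, a <= s <= b -> is_deriv_within (fun s => a <= s <= b) f s (f' s)) ->
  (forall s, a <= s <= b -> f' s <= 0) -> f b <= f a.
Proof.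
  intros Hab Hd Hneg.
  destruct (Req_dec a b) as [<-|Hne]; [lra|].
  set (g := fun s => f (clamp a b s)).
  destruct (MVT_gen g a b f') as [c [Hc E]].
  - intros x Hx. rewrite Rmin_left in Hx by lra. rewrite Rmax_right in Hx by lra.
    apply is_derive_Reals. intros eps He.
    destruct (Hd x ltac:(lra) eps He) as [d [Hd0 Hh]].
    assert (Hp : 0 < Rmin d (Rmin (x - a) (b - x))) by (repeat apply Rmin_pos; lra).
    exists (mkposreal _ Hp). intros h Hh0 Hhl. simpl in Hhl.
    assert (h1 : Rabs h < d) by (eapply Rlt_le_trans; [apply Hhl|apply Rmin_l]).
    assert (h2 : Rabs h < Rmin (x - a) (b - x)) by (eapply Rlt_le_trans; [apply Hhl|apply Rmin_r]).
    assert (h3 : Rabs h < x - a) by (eapply Rlt_le_trans; [apply h2|apply Rmin_l]).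
    assert (h4 : Rabs h < b - x) by (eapply Rlt_le_trans; [apply h2|apply Rmin_r]).
    assert (Hin : a <= x + h <= b) by (unfold Rabs in *; destruct Rcase_abs; lra).
    unfold g. rewrite (clamp_id a b (x+h) Hin), (clamp_id a b x) by lra. apply Hh; auto.
  - intros x Hx. rewrite Rmin_left in Hx by lra. rewrite Rmax_right in Hx by lra.
    apply clamp_cont; auto. eapply idw_cont. apply Hd; auto.
  - rewrite Rmin_left in Hc by lra. rewrite Rmax_right in Hc by lra.
    unfold g in E. rewrite (clamp_id a b b), (clamp_id a b a) in E by lra.
    specialize (Hneg c Hc). nra.
Qed.


Fixpoint TP (c : nat -> R) (t0 : R) (n : nat) (s : R) : R :=
  match n with 0%nat => 0 | S n => TP c t0 n s + c n / INR (fact n) * (s - t0) ^ n end.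

Lemma pow_term_deriv2 t0 n s :
  is_derive (fun s => (t0 - s) ^ (S n) / INR (fact (S n))) s (- ((t0 - s) ^ n / INR (fact n))).
Proof.
  auto_derive; auto. change (match n with 0%nat => 1 | S _ => INR n + 1 end) with (INR (S n)).
  replace (fact n + n * fact n)%nat with (S n * fact n)%nat by (simpl; lia).
  rewrite mult_INR. pose proof (INR_fact_lt_0 n). pose proof (pos_INR n). rewrite S_INR.
  replace (t0 + - s) with (t0 - s) by ring. field. lra.
Qed.

Lemma TP_t0 c t0 n : TP c t0 (S n) t0 = c 0%nat.
Proof.
  induction n. simpl; field.
  change (TP c t0 (S n) t0 + c (S n) / INR (fact (S n)) * (t0 - t0) ^ S n = c 0%nat).
  rewrite IHn. replace (t0 - t0) with 0 by ring.
  rewrite pow_i by lia. ring.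
Qed.

Lemma pow_term_deriv t0 n s :
  is_derive (fun s => (s - t0) ^ (S n) / INR (fact (S n))) s ((s - t0) ^ n / INR (fact n)).
Proof.
  auto_derive; auto. change (match n with 0%nat => 1 | S _ => INR n + 1 end) with (INR (S n)).
  replace (fact n + n * fact n)%nat with (S n * fact n)%nat by (simpl; lia).
  rewrite mult_INR. pose proof (INR_fact_lt_0 n). pose proof (pos_INR n). rewrite S_INR.
  replace (s + - t0) with (s - t0) by ring. field. lra.
Qed.

Lemma idw_ext_all (Sd : R -> Prop) f g t l :
  (forall s, f s = g s) -> is_deriv_within Sd f t l -> is_deriv_within Sd g t l.
Proof.
  intros Hfg H eps He. destruct (H eps He) as [d [Hd Hh]]. exists d; split; auto.
  intros h H1 H2 H3. rewrite <- !Hfg; auto.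
Qed.

Lemma TP_deriv Sd c t0 n s :
  is_deriv_within Sd (TP c t0 (S n)) s (TP (fun j => c (S j)) t0 n s).
Proof.
  induction n.
  - simpl. apply (idw_const Sd (0 + c 0%nat / 1 * 1)).
  - change (TP c t0 (S (S n))) with (fun s => TP c t0 (S n) s + c (S n) / INR (fact (S n)) * (s - t0) ^ (S n)).
    change (TP (fun j => c (S j)) t0 (S n) s) with (TP (fun j => c (S j)) t0 n s + c (S n) / INR (fact n) * (s - t0) ^ n).
    apply idw_plus. apply IHn.
    apply idw_ext_all with (fun s => c (S n) * ((s - t0) ^ (S n) / INR (fact (S n)))).
    intros; field; apply INR_fact_neq_0.
    replace (c (S n) / INR (fact n) * (s - t0) ^ n) with (c (S n) * ((s - t0) ^ n / INR (fact n))) by (field; apply INR_fact_neq_0).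
    apply idw_scal. apply idw_of_derive. apply pow_term_deriv.
Qed.

Lemma sum_TP c t0 t N :
  sum_n (fun j => c j / INR (fact j) * (t - t0) ^ j) N = TP c t0 (S N) t.
Proof.
  induction N.
  - rewrite sum_O. simpl. ring.
  - rewrite sum_Sn, IHN. simpl TP at 2. reflexivity.
Qed.

Section Taylor.
Variables a b t0 : R.
Hypothesis Ht0 : a <= t0 <= b.

Lemma taylor n : forall (g : nat -> R -> R) M,
  (forall j s, (j < n)%nat -> a <= s <= b -> is_deriv_within (fun s => a <= s <= b) (g j) s (g (S j) s)) ->
  (forall s, a <= s <= b -> Rabs (g n s) <= M) ->
  forall t, a <= t <= b ->
  Rabs (g 0%nat t - TP (fun j => g j t0) t0 n t) <= M * Rabs (t - t0) ^ n / INR (fact n).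
Proof.
  induction n; intros g M Hd HM t Ht.
  - simpl. replace (g 0%nat t - 0) with (g 0%nat t) by ring. rewrite Rdiv_1_r, Rmult_1_r. auto.
  - set (R0 := fun s => g 0%nat s - TP (fun j => g j t0) t0 (S n) s).
    set (R1 := fun s => g 1%nat s - TP (fun j => g (S j) t0) t0 n s).
    assert (IH : forall s, a <= s <= b -> Rabs (R1 s) <= M * Rabs (s - t0) ^ n / INR (fact n)).
    { intros s Hs. unfold R1. apply (IHn (fun j => g (S j)) M); auto.
      intros j s' Hj Hs'. apply Hd; auto. lia. }
    assert (DR : forall s, a <= s <= b -> is_deriv_within (fun s => a <= s <= b) R0 s (R1 s)).
    { intros s Hs. unfold R0, R1. apply idw_minus. apply Hd; auto. lia.
      apply TP_deriv. }
    assert (R00 : R0 t0 = 0). { unfold R0. rewrite TP_t0. ring. }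
    assert (HMpos : 0 <= M) by (eapply Rle_trans; [apply Rabs_pos| apply (HM t0 Ht0)]).
    change (Rabs (R0 t) <= M * Rabs (t - t0) ^ S n / INR (fact (S n))).
    destruct (Rle_dec t0 t) as [Hle|Hlt].
    +
      set (phi := fun s => M * ((s - t0) ^ (S n) / INR (fact (S n)))).
      assert (Dphi : forall s, is_derive phi s (M * ((s - t0) ^ n / INR (fact n)))).
      { intros s. unfold phi. apply is_derive_scal. apply pow_term_deriv. }
      assert (key : forall sg, (sg = 1 \/ sg = -1) -> sg * R0 t - phi t <= sg * R0 t0 - phi t0).
      { intros sg Hsg.
        apply (mono_lemma t0 t (fun s => sg * R0 s - phi s) (fun s => sg * R1 s - M * ((s - t0) ^ n / INR (fact n)))); auto.
        - intros s Hs. apply idw_minus. apply idw_scal. eapply idw_sub; [|apply DR; lra].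
          intros; simpl; lra. apply idw_of_derive, Dphi.
        - intros s Hs. specialize (IH s ltac:(lra)).
          rewrite (Rabs_right (s - t0)) in IH by lra.
          assert (sg * R1 s <= Rabs (R1 s)) by (destruct Hsg as [-> | ->]; unfold Rabs; destruct Rcase_abs; lra).
          unfold Rdiv in *. lra. }
      pose proof (key 1 (or_introl eq_refl)). pose proof (key (-1) (or_intror eq_refl)).
      rewrite R00 in *. unfold phi in *. simpl in *. rewrite Rminus_diag, Rmult_0_l in *.
      rewrite Rabs_right with (t - t0) by lra.
      unfold Rabs at 1; destruct Rcase_abs; unfold Rdiv in *; simpl in *; lra.
    + set (phi := fun s => M * ((t0 - s) ^ (S n) / INR (fact (S n)))).
      assert (Dphi : forall s, is_derive phi s (- (M * ((t0 - s) ^ n / INR (fact n))))).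
      { intros s. unfold phi.
        replace (- (M * ((t0 - s) ^ n / INR (fact n)))) with (M * (- ((t0 - s) ^ n / INR (fact n)))) by ring.
        apply is_derive_scal. apply pow_term_deriv2. }
      assert (key : forall sg, (sg = 1 \/ sg = -1) -> phi t0 - sg * R0 t0 <= phi t - sg * R0 t).
      { intros sg Hsg.
        apply (mono_lemma t t0 (fun s => phi s - sg * R0 s) (fun s => - (M * ((t0 - s) ^ n / INR (fact n))) - sg * R1 s)); auto.
        - lra.
        - intros s Hs. apply idw_minus. apply idw_of_derive, Dphi. apply idw_scal. eapply idw_sub; [|apply DR; lra].
          intros; simpl; lra.
        - intros s Hs. specialize (IH s ltac:(lra)).
          rewrite (Rabs_left1 (s - t0)) in IH by lra. replace (- (s - t0)) with (t0 - s) in IH by ring.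
          assert (- (sg * R1 s) <= Rabs (R1 s)) by (destruct Hsg as [-> | ->]; unfold Rabs; destruct Rcase_abs; lra).
          unfold Rdiv in *. lra. }
      pose proof (key 1 (or_introl eq_refl)). pose proof (key (-1) (or_intror eq_refl)).
      rewrite R00 in *. unfold phi in *. simpl in *. rewrite Rminus_diag, Rmult_0_l in *.
      rewrite Rabs_left1 with (t - t0) by lra. replace (- (t - t0)) with (t0 - t) by ring.
      unfold Rabs at 1; destruct Rcase_abs; unfold Rdiv in *; simpl in *; lra.
Qed.
End Taylor.


Section G.
Variable V : Type.
Variable nbrs : V -> list V.
Variable w : V -> V -> R.
Variable mu : V -> R.

Lemma fold_deriv (Sd : R -> Prop) (l : list V) (F : R -> V -> R) (F' : V -> R) t :
  (forall y, In y l -> is_deriv_within Sd (fun s => F s y) t (F' y)) ->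
  is_deriv_within Sd (fun s => fold_right Rplus 0 (map (F s) l)) t (fold_right Rplus 0 (map F' l)).
Proof.
  induction l as [|y l IH]; intros H; simpl.
  - apply idw_const.
  - apply idw_plus. apply H; simpl; auto. apply IH. intros; apply H; simpl; auto.
Qed.

Lemma lap_deriv (Sd : R -> Prop) (g : R -> V -> R) (g' : V -> R) t x :
  (forall y, is_deriv_within Sd (fun s => g s y) t (g' y)) ->
  is_deriv_within Sd (fun s => lap nbrs w mu (g s) x) t (lap nbrs w mu g' x).
Proof.
  intros H. unfold lap.
  apply (fold_deriv Sd (nbrs x) (fun s y => w x y / mu x * (g s y - g s x)) (fun y => w x y / mu x * (g' y - g' x))).
  intros y _. apply idw_scal. apply idw_minus; apply H.
Qed.

Lemma iter_deriv (Sd : R -> Prop) (g : R -> V -> R) (g' : V -> R) t k :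
  (forall y, is_deriv_within Sd (fun s => g s y) t (g' y)) ->
  forall x, is_deriv_within Sd (fun s => Nat.iter k (lap nbrs w mu) (g s) x) t (Nat.iter k (lap nbrs w mu) g' x).
Proof.
  intros H. induction k; intros x; simpl.
  - apply H.
  - apply (lap_deriv Sd (fun s => Nat.iter k (lap nbrs w mu) (g s))). apply IHk.
Qed.

Lemma fold_bound (l : list V) (c : V -> R) (f : V -> R) fx B :
  (forall y, In y l -> 0 <= c y) -> Rabs fx <= B -> (forall y, In y l -> Rabs (f y) <= B) ->
  Rabs (fold_right Rplus 0 (map (fun y => c y * (f y - fx)) l)) <= 2 * fold_right Rplus 0 (map c l) * B.
Proof.
  induction l as [|y l IH]; intros Hc Hx Hy; simpl.
  - rewrite Rabs_R0; lra.
  - eapply Rle_trans; [apply Rabs_triang|].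
    assert (A : Rabs (c y * (f y - fx)) <= 2 * c y * B).
    { rewrite Rabs_mult, Rabs_right by (apply Rle_ge, Hc; simpl; auto).
      assert (Rabs (f y - fx) <= 2 * B).
      { unfold Rminus. eapply Rle_trans; [apply Rabs_triang|]. rewrite Rabs_Ropp.
        pose proof (Hy y (or_introl eq_refl)). lra. }
      pose proof (Hc y (or_introl eq_refl)). nra. }
    assert (IH' := IH (fun z Hz => Hc z (or_intror Hz)) Hx (fun z Hz => Hy z (or_intror Hz))).
    lra.
Qed.

Lemma lap_bound (f : V -> R) x B :
  (forall y, In y (nbrs x) -> 0 <= w x y / mu x) -> Rabs (f x) <= B ->
  (forall y, In y (nbrs x) -> Rabs (f y) <= B) ->
  Rabs (lap nbrs w mu f x) <= 2 * Deg nbrs w mu x * B.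
Proof.
  intros. unfold lap, Deg. apply (fold_bound (nbrs x) (fun y => w x y / mu x) f (f x) B); auto.
Qed.

Lemma fold_nonneg (l : list V) (c : V -> R) :
  (forall y, In y l -> 0 <= c y) -> 0 <= fold_right Rplus 0 (map c l).
Proof.
  induction l; simpl; intros H. lra. pose proof (H a (or_introl eq_refl)).
  pose proof (IHl (fun y Hy => H y (or_intror Hy))). lra.
Qed.

Lemma Deg_nonneg x : (forall y, In y (nbrs x) -> 0 <= w x y / mu x) -> 0 <= Deg nbrs w mu x.
Proof. intros; unfold Deg; apply fold_nonneg; auto. Qed.

Lemma weight_nonneg x y : weights_ok nbrs w mu -> In y (nbrs x) -> 0 <= w x y / mu x.
Proof.
  intros [Hw Hmu] Hy. destruct (Hw x y Hy) as [_ Hpos]. pose proof (Hmu x).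
  apply Rlt_le, Rdiv_lt_0_compat; auto.
Qed.

Variable p : V.
Variable d : V -> nat.

Lemma d_p : is_dist_to nbrs p d -> d p = 0%nat.
Proof. intros H. destruct (H p) as [_ Hm]. specialize (Hm 0%nat (walk0 _ p)). lia. Qed.

Lemma d_pos x : is_dist_to nbrs p d -> x <> p -> (1 <= d x)%nat.
Proof.
  intros H Hx. destruct (H x) as [Hw _]. destruct (d x) eqn:E; [|lia].
  inversion Hw; subst. congruence.
Qed.

Lemma d_nbr x y : simple_graph nbrs -> is_dist_to nbrs p d -> In y (nbrs x) -> (d y <= S (d x))%nat.
Proof.
  intros [_ [_ Hsym]] H Hy. destruct (H y) as [_ Hm]. apply Hm.
  econstructor. apply Hsym; eauto. apply (proj1 (H x)).
Qed.
End G.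


Lemma Rpower_pos x e : 0 < Rpower x e.
Proof. unfold Rpower; apply exp_pos. Qed.

Lemma Rpower_0e x : Rpower x 0 = 1.
Proof. unfold Rpower. rewrite Rmult_0_l. apply exp_0. Qed.

Lemma Rpower_mono_base (m m' : nat) e : 0 <= e -> (1 <= m)%nat -> (m <= m')%nat ->
  Rpower (INR m) e <= Rpower (INR m') e.
Proof.
  intros He Hv1 H2. apply Rle_Rpower_l; auto. split. apply lt_0_INR; lia. apply le_INR; auto.
Qed.

Lemma mono3 a b b' c c' : 0 <= a -> 0 <= b <= b' -> 0 <= c <= c' -> a * b * c <= a * b' * c'.
Proof. intros. apply Rmult_le_compat; try nra. Qed.

Section Bound.
Variable V : Type.
Variable nbrs : V -> list V.
Variable w : V -> V -> R.
Variable mu : V -> R.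
Variable p : V.
Variable d : V -> nat.
Hypothesis Hsg : simple_graph nbrs.
Hypothesis Hwk : weights_ok nbrs w mu.
Hypothesis Hd : is_dist_to nbrs p d.

Variables (D' alpha gam Mp : R) (L : nat) (H : nat -> R).
Hypothesis HD' : 0 < D'.
Hypothesis Halpha : 0 <= alpha.
Hypothesis Hgam : 1 <= gam.
Hypothesis HL : (1 <= L)%nat.
Hypothesis HH0 : forall m, 0 <= H m.
Hypothesis HHm : forall m m', (m <= m')%nat -> H m <= H m'.
Hypothesis Hdeg : forall y, y <> p -> Deg nbrs w mu y <= D' * Rpower (INR (d y)) alpha.
Hypothesis HMp : Deg nbrs w mu p <= Mp.
Hypothesis c1 : forall m, (L <= m)%nat -> gam * H m <= H (m + 2).
Hypothesis c2 : Mp <= D' * gam * Rpower (INR (L + 1)) alpha.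
Hypothesis c3 : forall m, (L <= m)%nat -> Mp * H m <= D' * Rpower (INR (L + 1)) alpha * H (m + 1).

Definition Phi (k n : nat) : R :=
  (2 * D') ^ k * Rpower (INR (n + k + L)) (alpha * INR k) * H (n + k + L) *
  (if Nat.eqb n 0 then gam else 1).

Lemma Phi_nonneg k n : 0 <= Phi k n.
Proof.
  unfold Phi. pose proof (Rpower_pos (INR (n + k + L)) (alpha * INR k)).
  pose proof (pow_le (2 * D') k ltac:(lra)). pose proof (HH0 (n + k + L)).
  assert (0 <= (if Nat.eqb n 0 then gam else 1)) by (destruct Nat.eqb; lra).
  apply Rmult_le_pos; [|auto]. apply Rmult_le_pos; [|auto]. apply Rmult_le_pos; lra.
Qed.

Lemma Phi_mono k j n : (j <= n)%nat -> (2 <= n)%nat -> Phi k j <= Phi k n.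
Proof.
  intros Hjn Hn. unfold Phi.
  replace (Nat.eqb n 0) with false by (symmetry; apply Nat.eqb_neq; lia).
  pose proof (pow_le (2 * D') k ltac:(lra)) as P0.
  assert (Ak : 0 <= alpha * INR k) by (apply Rmult_le_pos; auto; apply pos_INR).
  destruct (Nat.eqb j 0) eqn:Ej.
  - apply Nat.eqb_eq in Ej; subst j.
    assert (A1 : Rpower (INR (0 + k + L)) (alpha * INR k) <= Rpower (INR (n + k + L)) (alpha * INR k))
      by (apply Rpower_mono_base; [auto|lia|lia]).
    assert (A2 : gam * H (0 + k + L) <= H (n + k + L)).
    { eapply Rle_trans; [apply c1; lia|]. apply HHm; lia. }
    pose proof (Rpower_pos (INR (0 + k + L)) (alpha * INR k)).
    pose proof (HH0 (0 + k + L)).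
    replace ((2 * D') ^ k * Rpower (INR (0 + k + L)) (alpha * INR k) * H (0 + k + L) * gam)
      with (((2 * D') ^ k * Rpower (INR (0 + k + L)) (alpha * INR k)) * (gam * H (0 + k + L))) by ring.
    rewrite Rmult_1_r. apply Rmult_le_compat; try nra.
  - apply Nat.eqb_neq in Ej. change (if false then gam else 1) with 1.
    apply Rmult_le_compat_r; [lra|].
    apply mono3; auto. split. apply Rlt_le, Rpower_pos. apply Rpower_mono_base; [auto|lia|lia].
    split. apply HH0. apply HHm; lia.
Qed.

Variable F : nat -> V -> R.
Hypothesis HF : forall k y, F (S k) y = lap nbrs w mu (F k) y.
Hypothesis HF0 : forall y, Rabs (F 0%nat y) <= H (d y).

Lemma Phi_bound k : forall y, Rabs (F k y) <= Phi k (d y).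
Proof.
  induction k; intros y.
  - unfold Phi. simpl. rewrite Rmult_0_r, Rpower_0e, !Rmult_1_l.
    eapply Rle_trans; [apply HF0|].
    assert (H (d y) <= H (d y + 0 + L)) by (apply HHm; lia).
    destruct Nat.eqb; pose proof (HH0 (d y + 0 + L)); nra.
  - rewrite HF.
    pose proof (fun y z => weight_nonneg V nbrs w mu y z Hwk) as Wn.
    assert (Dn : forall y, 0 <= Deg nbrs w mu y) by (intros; apply Deg_nonneg; auto).
    assert (P2 : 0 <= 2 * D') by lra.
    assert (Ak : 0 <= alpha * INR k) by (apply Rmult_le_pos; auto; apply pos_INR).
    assert (Hmpos : 0 <= Mp) by (pose proof (Dn p); lra).
    destruct (classic (y = p)) as [->|Hyp].
    + rewrite (d_p V nbrs p d Hd).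
      set (B := Rmax (Phi k 0) (Phi k 1)).
      assert (HB : Rabs (lap nbrs w mu (F k) p) <= 2 * Deg nbrs w mu p * B).
      { apply lap_bound. intros; apply Wn; auto.
        eapply Rle_trans; [apply IHk|]. rewrite (d_p V nbrs p d Hd). apply Rmax_l.
        intros z Hz. eapply Rle_trans; [apply IHk|].
        pose proof (d_nbr V nbrs p d p z Hsg Hd Hz) as Hdz. rewrite (d_p V nbrs p d Hd) in Hdz.
        destruct (d z) as [|[|m]]; [apply Rmax_l|apply Rmax_r|lia]. }
      assert (HB0 : 0 <= B) by (eapply Rle_trans; [apply Phi_nonneg| apply (Rmax_l _ (Phi k 1))]).
      eapply Rle_trans; [apply HB|].
      apply Rle_trans with (2 * Mp * B). pose proof (Dn p). nra.
      assert (E : forall x, Rpower x (alpha * INR (S k)) = Rpower x (alpha * INR k) * Rpower x alpha).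
      { intros x. rewrite S_INR, <- Rpower_plus. f_equal. ring. }
      assert (Rpl : Rpower (INR (L + 1)) alpha <= Rpower (INR (0 + S k + L)) alpha)
        by (apply Rpower_mono_base; [auto|lia|lia]).
      unfold B, Rmax. destruct Rle_dec.
      * unfold Phi. simpl Nat.eqb. cbv iota. rewrite E. simpl pow.
        assert (e : (0 + S k + L = 1 + k + L)%nat) by lia. rewrite e in *.
        pose proof (Rpower_pos (INR (1 + k + L)) (alpha * INR k)).
        pose proof (HH0 (1 + k + L)). pose proof (pow_le (2 * D') k ltac:(lra)).
        set (P := (2 * D') ^ k) in *. set (A := Rpower (INR (1 + k + L)) (alpha * INR k)) in *.
        set (Q := Rpower (INR (L + 1)) alpha) in *. set (Q' := Rpower (INR (1 + k + L)) alpha) in *.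
        set (Hv1 := H (1 + k + L)) in *.
        assert (X0 : 0 <= P * A * Hv1) by (apply Rmult_le_pos; [apply Rmult_le_pos|]; lra).
        assert (Mp * (P * A * Hv1) <= D' * gam * Q' * (P * A * Hv1)).
        { apply Rmult_le_compat_r; auto. eapply Rle_trans; [apply c2|].
          apply Rmult_le_compat_l; auto. nra. }
        nra.
      * unfold Phi. simpl Nat.eqb. cbv iota. rewrite E. simpl pow.
        assert (A1 : Rpower (INR (0 + k + L)) (alpha * INR k) <= Rpower (INR (0 + S k + L)) (alpha * INR k))
          by (apply Rpower_mono_base; [auto|lia|lia]).
        assert (A2 : Mp * H (0 + k + L) <= D' * Rpower (INR (L + 1)) alpha * H (0 + S k + L)).
        { replace (0 + S k + L)%nat with (0 + k + L + 1)%nat by lia. apply c3. lia. }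
        pose proof (Rpower_pos (INR (0 + k + L)) (alpha * INR k)).
        pose proof (Rpower_pos (INR (L + 1)) alpha).
        pose proof (HH0 (0 + k + L)). pose proof (HH0 (0 + S k + L)).
        pose proof (pow_le (2 * D') k ltac:(lra)).
        set (P := (2 * D') ^ k) in *. set (A := Rpower (INR (0 + k + L)) (alpha * INR k)) in *.
        set (A' := Rpower (INR (0 + S k + L)) (alpha * INR k)) in *.
        set (Q := Rpower (INR (L + 1)) alpha) in *. set (Q' := Rpower (INR (0 + S k + L)) alpha) in *.
        set (H0' := H (0 + k + L)) in *. set (Hv1 := H (0 + S k + L)) in *.
        assert (S1 : Mp * (A * H0') <= A' * (D' * Q * Hv1)).
        { replace (Mp * (A * H0')) with (A * (Mp * H0')) by ring. apply Rmult_le_compat; nra. }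
        assert (S2 : A' * (D' * Q * Hv1) <= A' * (D' * Q' * Hv1)).
        { apply Rmult_le_compat_l. lra. apply Rmult_le_compat_r. lra. apply Rmult_le_compat_l; lra. }
        assert (S3 : 2 * Mp * (P * A * H0' * gam) = 2 * P * gam * (Mp * (A * H0'))) by ring.
        rewrite S3. assert (0 <= 2 * P * gam) by nra.
        apply Rle_trans with (2 * P * gam * (A' * (D' * Q' * Hv1))).
        apply Rmult_le_compat_l; lra. right; ring.
    + pose proof (d_pos V nbrs p d y Hd Hyp) as Hn.
      set (n := d y) in *.
      assert (HB : Rabs (lap nbrs w mu (F k) y) <= 2 * Deg nbrs w mu y * Phi k (S n)).
      { apply lap_bound. intros; apply Wn; auto.
        eapply Rle_trans; [apply IHk|]. apply Phi_mono; unfold n; lia.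
        intros z Hz. eapply Rle_trans; [apply IHk|].
        pose proof (d_nbr V nbrs p d y z Hsg Hd Hz). apply Phi_mono; unfold n in *; lia. }
      eapply Rle_trans; [apply HB|].
      pose proof (Hdeg y Hyp) as Hdy. fold n in Hdy.
      pose proof (Phi_nonneg k (S n)).
      apply Rle_trans with (2 * (D' * Rpower (INR n) alpha) * Phi k (S n)).
      { apply Rmult_le_compat_r; auto. lra. }
      assert (E : forall x, Rpower x (alpha * INR (S k)) = Rpower x (alpha * INR k) * Rpower x alpha).
      { intros x. rewrite S_INR, <- Rpower_plus. f_equal. ring. }
      unfold Phi. replace (Nat.eqb n 0) with false by (symmetry; apply Nat.eqb_neq; lia).
      simpl Nat.eqb. cbv iota. rewrite E. simpl pow.
      replace (n + S k + L)%nat with (S n + k + L)%nat by lia.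
      assert (Rpower (INR n) alpha <= Rpower (INR (S n + k + L)) alpha) by (apply Rpower_mono_base; [auto|lia|lia]).
      pose proof (Rpower_pos (INR (S n + k + L)) (alpha * INR k)).
      pose proof (HH0 (S n + k + L)). pose proof (pow_le (2 * D') k ltac:(lra)).
      set (P := (2 * D') ^ k) in *. set (A := Rpower (INR (S n + k + L)) (alpha * INR k)) in *.
      set (Q := Rpower (INR n) alpha) in *. set (Q' := Rpower (INR (S n + k + L)) alpha) in *.
      set (Hv1 := H (S n + k + L)) in *.
      assert (0 <= P * A * Hv1) by (apply Rmult_le_pos; [apply Rmult_le_pos|]; lra).
      assert (Q * (P * A * Hv1) <= Q' * (P * A * Hv1)) by (apply Rmult_le_compat_r; lra).
      nra.
Qed.
End Bound.


Lemma exp_mono x y : x <= y -> exp x <= exp y.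
Proof. intros [H| ->]; [left; apply exp_increasing; auto| right; auto]. Qed.

Lemma ln_1p x : 0 < x -> ln (1 + x) <= x.
Proof.
  intros Hx. rewrite <- (ln_exp x) at 2. apply ln_le. lra. apply exp_ineq1_le.
Qed.

Definition ek (c q beta A1 : R) (b k : nat) : R :=
  c * q ^ k * Rpower (INR (k + b)) (beta * INR k + A1 * INR b) / INR (fact (2 * k)).

Definition rhok (q beta : R) (b k : nat) : R :=
  q * exp 2 * Rpower (INR (k + b + 1)) beta / (INR (2 * k + 1) * INR (2 * k + 2)).

Lemma ek_ratio c q beta A1 b k : 0 <= c -> 0 <= q -> 0 <= beta <= 2 -> 0 <= A1 <= 2 -> (1 <= b)%nat ->
  ek c q beta A1 b (S k) <= ek c q beta A1 b k * rhok q beta b k.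
Proof.
  intros Hc Hq Hb HA Hb1. unfold ek, rhok.
  set (m := INR (k + b)).
  assert (Hm : 1 <= m) by (unfold m; replace 1 with (INR 1) by reflexivity; apply le_INR; lia).
  replace (INR (S k + b)) with (m + 1) by (unfold m; rewrite <- S_INR; f_equal; lia).
  replace (INR (k + b + 1)) with (m + 1) by (unfold m; rewrite (plus_INR (k + b) 1); change (INR 1) with 1; ring).
  set (E := beta * INR k + A1 * INR b).
  assert (HE0 : 0 <= E) by (unfold E; pose proof (pos_INR k); pose proof (pos_INR b); nra).
  assert (HE2 : E <= 2 * m) by (unfold E, m; rewrite plus_INR; pose proof (pos_INR k); pose proof (pos_INR b); nra).
  replace (beta * INR (S k) + A1 * INR b) with (E + beta) by (unfold E; rewrite S_INR; ring).
  rewrite Rpower_plus.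
  assert (KE : Rpower (m + 1) E <= Rpower m E * exp 2).
  { unfold Rpower. rewrite <- exp_plus. apply exp_mono.
    replace (m + 1) with (m * (1 + / m)) by (field; lra).
    rewrite ln_mult by (try lra; pose proof (Rinv_0_lt_compat m ltac:(lra)); lra).
    pose proof (ln_1p (/ m) (Rinv_0_lt_compat m ltac:(lra))).
    assert (E * / m <= 2). { apply Rmult_le_reg_r with m. lra. field_simplify; lra. }
    nra. }
  replace (2 * S k)%nat with (S (S (2 * k))) by lia.
  rewrite !fact_simpl, !mult_INR.
  replace (INR (S (S (2 * k)))) with (INR (2 * k + 2)) by (f_equal; lia).
  replace (INR (S (2 * k))) with (INR (2 * k + 1)) by (f_equal; lia).
  pose proof (INR_fact_lt_0 (2 * k)).
  assert (0 < INR (2 * k + 1)) by (apply lt_0_INR; lia).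
  assert (0 < INR (2 * k + 2)) by (apply lt_0_INR; lia).
  pose proof (Rpower_pos (m + 1) beta). pose proof (Rpower_pos m E).
  pose proof (pow_le q k Hq).
  simpl pow.
  set (F := INR (fact (2 * k))) in *. set (a1 := INR (2 * k + 1)) in *. set (a2 := INR (2 * k + 2)) in *.
  set (RB := Rpower (m + 1) beta) in *. set (RE := Rpower (m + 1) E) in *. set (RE0 := Rpower m E) in *.
  set (Q := q ^ k) in *.
  replace (c * (q * Q) * (RE * RB) / (a2 * (a1 * F))) with ((c * q * Q * RB / (a2 * a1 * F)) * RE) by (field; lra).
  replace (c * Q * RE0 / F * (q * exp 2 * RB / (a1 * a2))) with ((c * q * Q * RB / (a2 * a1 * F)) * (RE0 * exp 2)) by (field; lra).
  apply Rmult_le_compat_l; auto.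
  apply Rmult_le_pos. apply Rmult_le_pos. apply Rmult_le_pos. apply Rmult_le_pos; auto. auto. lra.
  apply Rlt_le, Rinv_0_lt_compat. apply Rmult_lt_0_compat; [apply Rmult_lt_0_compat|]; lra.
Qed.

Lemma ek_nonneg c q beta A1 b k : 0 <= c -> 0 <= q -> 0 <= ek c q beta A1 b k.
Proof.
  intros. unfold ek. apply Rmult_le_pos. apply Rmult_le_pos. apply Rmult_le_pos; auto. apply pow_le; auto.
  apply Rlt_le, Rpower_pos. apply Rlt_le, Rinv_0_lt_compat, INR_fact_lt_0.
Qed.

Lemma geom_decay (e : nat -> R) (r : R) k0 :
  0 <= r < 1 -> (forall k, 0 <= e k) -> (forall k, (k0 <= k)%nat -> e (S k) <= e k * r) ->
  forall eps, 0 < eps -> exists N, forall k, (N <= k)%nat -> e k < eps.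
Proof.
  intros Hr He Hrat eps Heps.
  assert (Hb : forall n, e (n + k0)%nat <= e k0 * r ^ n).
  { induction n. simpl. lra. replace (S n + k0)%nat with (S (n + k0)) by lia.
    eapply Rle_trans. apply Hrat; lia. simpl. pose proof (He k0). nra. }
  destruct (Req_dec r 0) as [Hr0|Hr0].
  - exists (S k0). intros k Hk. replace k with (S (k - S k0) + k0)%nat by lia.
    eapply Rle_lt_trans; [apply Hb|]. rewrite Hr0. simpl. lra.
  - assert (Hl : is_lim_seq (fun n => r ^ n) 0) by (apply is_lim_seq_geom; rewrite Rabs_right; lra).
    apply is_lim_seq_spec in Hl.
    assert (Hp : 0 < eps / (e k0 + 1)) by (apply Rdiv_lt_0_compat; auto; pose proof (He k0); lra).
    destruct (Hl (mkposreal _ Hp)) as [N HN].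
    exists (N + k0)%nat. intros k Hk. replace k with ((k - k0) + k0)%nat by lia.
    eapply Rle_lt_trans; [apply Hb|]. specialize (HN (k - k0)%nat ltac:(lia)). simpl in HN.
    rewrite Rminus_0_r, Rabs_right in HN by (apply Rle_ge, pow_le; lra).
    pose proof (He k0). pose proof (pow_le r (k - k0) ltac:(lra)).
    apply Rle_lt_trans with ((e k0 + 1) * r ^ (k - k0)). nra.
    apply Rmult_lt_reg_r with (/ (e k0 + 1)). apply Rinv_0_lt_compat; lra.
    replace ((e k0 + 1) * r ^ (k - k0) * / (e k0 + 1)) with (r ^ (k - k0)) by (field; lra). exact HN.
Qed.

Lemma nat_above (x : R) : exists n : nat, x <= INR n.
Proof. destruct (INR_archimed 1 x) as [n Hn]; [lra|]. exists n. lra. Qed.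

Lemma rho_crit q b : 0 <= q -> q * exp 2 < 4 -> exists r k0, 0 <= r < 1 /\
  forall k, (k0 <= k)%nat -> rhok q 2 b k <= r.
Proof.
  intros Hq Hs. set (s := q * exp 2) in *.
  assert (s0 : 0 <= s) by (unfold s; pose proof (exp_pos 2); nra).
  set (r := (s / 4 + 1) / 2). set (del := 2 - s / 2).
  set (c := INR b + 1).
  assert (c0 : 1 <= c) by (unfold c; pose proof (pos_INR b); lra).
  destruct (nat_above (c + 3 * s * c / del)) as [k0 Hk0].
  exists r, k0. split. unfold r; lra.
  intros k Hk. unfold rhok. fold s.
  assert (Hkr : c + 3 * s * c / del <= INR k) by (eapply Rle_trans; [apply Hk0| apply le_INR; auto]).
  assert (Hdel : 0 < del) by (unfold del; lra).
  assert (H3 : 3 * s * c / del * del = 3 * s * c) by (field; lra).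
  assert (Hkc : c <= INR k). { assert (0 <= 3 * s * c / del) by (apply Rmult_le_pos; [nra| left; apply Rinv_0_lt_compat; lra]). lra. }
  assert (Hk2 : 3 * s * c <= del * INR k).
  { assert (3 * s * c / del <= INR k) by (assert (0 <= c) by lra; lra).
    rewrite <- H3. rewrite Rmult_comm. apply Rmult_le_compat_l; lra. }
  replace (INR (k + b + 1)) with (INR k + c) by (unfold c; rewrite !plus_INR; change (INR 1) with 1; ring).
  assert (Hx : 0 < INR k + c) by lra.
  replace (Rpower (INR k + c) 2) with ((INR k + c) ^ 2) by (replace 2 with (INR 2) by (simpl; ring); rewrite Rpower_pow by auto; reflexivity).
  replace (INR (2 * k + 1)) with (2 * INR k + 1) by (rewrite plus_INR, mult_INR; simpl; ring).
  replace (INR (2 * k + 2)) with (2 * INR k + 2) by (rewrite plus_INR, mult_INR; simpl; ring).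
  set (K := INR k) in *.
  assert (Hden : 0 < (2 * K + 1) * (2 * K + 2)) by nra.
  apply Rmult_le_reg_r with ((2 * K + 1) * (2 * K + 2)); auto.
  unfold Rdiv. rewrite Rmult_assoc, Rinv_l, Rmult_1_r by lra.
  simpl pow. rewrite Rmult_1_r.
  assert (s * (K + c) * (K + c) <= s * K * K + del * K * K).
  { assert (s * (2 * K * c + c * c) <= 3 * s * c * K) by (assert (c * c <= K * c) by nra; nra).
    assert (3 * s * c * K <= del * K * K) by nra. nra. }
  unfold r, del in *. nra.
Qed.

Lemma rho_noncrit q beta b : 0 <= q -> 0 <= beta < 2 -> exists r k0, 0 <= r < 1 /\
  forall k, (k0 <= k)%nat -> rhok q beta b k <= r.
Proof.
  intros Hq Hb. set (s := q * exp 2).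
  assert (s0 : 0 <= s) by (unfold s; pose proof (exp_pos 2); nra).
  set (eps := 2 - beta). assert (He : 0 < eps) by (unfold eps; lra).
  set (c := INR b + 1).
  assert (c0 : 1 <= c) by (unfold c; pose proof (pos_INR b); lra).
  destruct (nat_above (c + exp (ln (2 * s + 1) / eps))) as [k0 Hk0].
  exists (1/2), k0. split. lra.
  intros k Hk. unfold rhok. fold s.
  assert (Hkr : c + exp (ln (2 * s + 1) / eps) <= INR k) by (eapply Rle_trans; [apply Hk0| apply le_INR; auto]).
  pose proof (exp_pos (ln (2 * s + 1) / eps)).
  replace (INR (k + b + 1)) with (INR k + c) by (unfold c; rewrite !plus_INR; change (INR 1) with 1; ring).
  set (x := INR k + c).
  assert (Hx : exp (ln (2 * s + 1) / eps) <= x) by (unfold x; lra).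
  assert (Hx2 : x <= 2 * INR k) by (unfold x; lra).
  assert (Hxp : 0 < x) by lra.
  replace beta with (2 + - eps) by (unfold eps; ring).
  rewrite Rpower_plus.
  replace (Rpower x 2) with (x ^ 2) by (replace 2 with (INR 2) by (simpl; ring); rewrite Rpower_pow by auto; reflexivity).
  assert (Hsm : s * Rpower x (- eps) <= / 2).
  { unfold Rpower. 
    assert (ln (2 * s + 1) / eps <= ln x).
    { rewrite <- (ln_exp (ln (2 * s + 1) / eps)). apply ln_le; auto. }
    assert (- eps * ln x <= - ln (2 * s + 1)).
    { assert (ln (2 * s + 1) <= eps * ln x).
      { apply Rmult_le_reg_r with (/ eps). apply Rinv_0_lt_compat; lra.
        replace (eps * ln x * / eps) with (ln x) by (field; lra). exact H0. }
      lra. }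
    apply exp_mono in H1. rewrite exp_Ropp, exp_ln in H1 by lra.
    pose proof (exp_pos (- eps * ln x)).
    apply Rle_trans with (s * / (2 * s + 1)). apply Rmult_le_compat_l; auto.
    apply Rmult_le_reg_r with (2 * (2 * s + 1)). lra.
    replace (s * / (2 * s + 1) * (2 * (2 * s + 1))) with (2 * s) by (field; lra).
    replace (/ 2 * (2 * (2 * s + 1))) with (2 * s + 1) by field. lra. }
  replace (INR (2 * k + 1)) with (2 * INR k + 1) by (rewrite plus_INR, mult_INR; simpl; ring).
  replace (INR (2 * k + 2)) with (2 * INR k + 2) by (rewrite plus_INR, mult_INR; simpl; ring).
  set (K := INR k) in *.
  assert (HK : 0 <= K) by (unfold K; apply pos_INR).
  assert (Hden : 0 < (2 * K + 1) * (2 * K + 2)) by nra.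
  apply Rmult_le_reg_r with ((2 * K + 1) * (2 * K + 2)); auto.
  unfold Rdiv. rewrite Rmult_assoc, Rinv_l, Rmult_1_r by lra.
  pose proof (Rpower_pos x (- eps)).
  assert (x ^ 2 <= (2 * K + 1) * (2 * K + 2)) by (simpl; nra).
  set (Y := Rpower x (- eps)) in *.
  assert (s * Y * x ^ 2 <= / 2 * x ^ 2) by (apply Rmult_le_compat_r; [apply pow2_ge_0| lra]).
  nra.
Qed.


Section Main.
Variable V : Type.
Variable nbrs : V -> list V.
Variable w : V -> V -> R.
Variable mu : V -> R.
Variable p : V.
Variable d : V -> nat.
Variables (T : Rbar) (u u1 u2 : R -> V -> R).
Hypothesis Hsg : simple_graph nbrs.
Hypothesis Hwk : weights_ok nbrs w mu.
Hypothesis Hd : is_dist_to nbrs p d.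
Hypothesis HC2 : forall x, C2_with (Itime T) (fun t => u t x) (fun t => u1 t x) (fun t => u2 t x).
Hypothesis Hwave : forall t x, Itime T t -> u2 t x = lap nbrs w mu (u t) x.

Let Lp := lap nbrs w mu.

Definition fn (x : V) (n : nat) (t : R) : R :=
  Nat.iter (Nat.div2 n) Lp (if Nat.even n then u t else u1 t) x.

Lemma fn_even x k t : fn x (2 * k) t = Nat.iter k Lp (u t) x.
Proof. unfold fn. rewrite Nat.div2_double, Nat.even_even. reflexivity. Qed.

Lemma fn_odd x k t : fn x (S (2 * k)) t = Nat.iter k Lp (u1 t) x.
Proof.
  unfold fn. rewrite Nat.div2_succ_double. replace (S (2 * k)) with (2 * k + 1)%nat by lia.
  rewrite Nat.even_odd. reflexivity.
Qed.

Lemma fn_deriv x n t : Itime T t -> is_deriv_within (Itime T) (fn x n) t (fn x (S n) t).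
Proof.
  intros Ht. destruct (Nat.Even_or_Odd n) as [[k ->]|[k ->]].
  - rewrite fn_odd. apply idw_ext_all with (fun s => Nat.iter k Lp (u s) x).
    intros; symmetry; apply fn_even.
    apply (iter_deriv V nbrs w mu (Itime T) u (u1 t) t k). intros y. apply (HC2 y t Ht).
  - replace (2 * k + 1)%nat with (S (2 * k)) by lia.
    replace (S (S (2 * k))) with (2 * (S k))%nat by lia. rewrite fn_even.
    apply idw_ext_all with (fun s => Nat.iter k Lp (u1 s) x).
    intros; symmetry; apply fn_odd.
    assert (E : Nat.iter (S k) Lp (u t) x = Nat.iter k Lp (u2 t) x).
    { rewrite Nat.iter_succ_r. f_equal. apply functional_extensionality. intros y.
      rewrite Hwave; auto. }
    rewrite E. apply (iter_deriv V nbrs w mu (Itime T) u1 (u2 t) t k). intros y. apply (HC2 y t Ht).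
Qed.

Lemma Itime_conv t0 t s : Itime T t0 -> Itime T t -> Rmin t0 t <= s <= Rmax t0 t -> Itime T s.
Proof.
  intros [H0 H0'] [H1 H1'] Hs. split.
  - apply Rle_trans with (Rmin t0 t); [|lra]. unfold Rmin; destruct Rle_dec; lra.
  - assert (Hb : s <= t0 \/ s <= t) by (unfold Rmax in Hs; destruct Rle_dec; lra).
    destruct T; simpl in *; auto; lra.
Qed.

Lemma cont_abs (Sd : R -> Prop) f t : cont_within Sd f t -> cont_within Sd (fun s => Rabs (f s)) t.
Proof.
  intros H eps He. destruct (H eps He) as [dl [Hdl Hh]]. exists dl; split; auto.
  intros s Hs HS. eapply Rle_lt_trans; [apply Rabs_triang_inv2|]. apply Hh; auto.
Qed.

Lemma bound_p t0 t : Itime T t0 -> Itime T t -> exists K0, 0 <= K0 /\ (forall s, Rmin t0 t <= s <= Rmax t0 t -> Rabs (u s p) <= K0).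
Proof.
  intros H0 H1. set (a := Rmin t0 t). set (b := Rmax t0 t).
  assert (Hab : a <= b) by (unfold a, b, Rmin, Rmax; repeat destruct Rle_dec; lra).
  destruct (continuity_ab_maj (fun s => Rabs (u (clamp a b s) p)) a b Hab) as [Mx [HM HMx]].
  { intros c Hc. apply (clamp_cont a b (fun s => Rabs (u s p))); auto.
    apply cont_abs. eapply idw_cont. eapply idw_sub; [|apply (HC2 p c (Itime_conv t0 t c H0 H1 Hc))].
    intros s' Hs'. apply (Itime_conv t0 t s' H0 H1 Hs'). }
  exists (Rabs (u (clamp a b Mx) p)). split. apply Rabs_pos.
  intros s Hs. specialize (HM s Hs). rewrite clamp_id in HM by auto. exact HM.
Qed.

Definition H1f (A1 : R) (m : nat) : R := Rpower (INR m) (A1 * INR m).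

Lemma H1f_ge1 A1 m : 0 <= A1 -> 1 <= H1f A1 m.
Proof.
  intros HA. unfold H1f, Rpower. destruct m.
  - simpl. rewrite Rmult_0_r, Rmult_0_l, exp_0. lra.
  - rewrite <- exp_0. apply exp_mono. apply Rmult_le_pos. apply Rmult_le_pos; auto. apply pos_INR.
    rewrite <- ln_1. apply ln_le. lra. replace 1 with (INR 1) by reflexivity. apply le_INR; lia.
Qed.

Lemma H1f_mono A1 m m' : 0 <= A1 -> (m <= m')%nat -> H1f A1 m <= H1f A1 m'.
Proof.
  intros HA Hm. destruct m. { assert (E : H1f A1 0 = 1) by (unfold H1f, Rpower; simpl; rewrite Rmult_0_r, Rmult_0_l, exp_0; reflexivity). rewrite E. apply H1f_ge1; auto. }
  unfold H1f, Rpower. apply exp_mono.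
  assert (0 <= ln (INR (S m))). { rewrite <- ln_1. apply ln_le. lra. replace 1 with (INR 1) by reflexivity. apply le_INR; lia. }
  assert (ln (INR (S m)) <= ln (INR m')) by (apply ln_le; [apply lt_0_INR; lia| apply le_INR; auto]).
  assert (INR (S m) <= INR m') by (apply le_INR; auto).
  pose proof (pos_INR (S m)).
  assert (INR (S m) * ln (INR (S m)) <= INR m' * ln (INR m')) by (apply Rmult_le_compat; lra).
  rewrite !Rmult_assoc. apply Rmult_le_compat_l; auto.
Qed.

Lemma H1f_growth A1 m : 0 <= A1 -> (1 <= m)%nat ->
  Rpower (INR (m + 1)) A1 * H1f A1 m <= H1f A1 (m + 1).
Proof.
  intros HA Hm. unfold H1f, Rpower. rewrite <- exp_plus. apply exp_mono.
  rewrite plus_INR. change (INR 1) with 1.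
  assert (ln (INR m) <= ln (INR m + 1)) by (apply ln_le; [apply lt_0_INR; lia| lra]).
  pose proof (pos_INR m).
  assert (A1 * INR m * ln (INR m) <= A1 * INR m * ln (INR m + 1)) by (apply Rmult_le_compat_l; [apply Rmult_le_pos|]; lra).
  lra.
Qed.

Definition params (D alpha A1 D' gam : R) (L : nat) : Prop :=
  (D <= D') /\ (1 <= gam) /\ (1 <= L)%nat /\
  (forall m, (L <= m)%nat -> gam * H1f A1 m <= H1f A1 (m + 2)) /\
  (Deg nbrs w mu p <= D' * gam * Rpower (INR (L + 1)) alpha) /\
  (forall m, (L <= m)%nat -> Deg nbrs w mu p * H1f A1 m <= D' * Rpower (INR (L + 1)) alpha * H1f A1 (m + 1)).

Lemma core x t0 t D alpha A1 C D' gam L :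
  0 < D -> 0 <= alpha -> 0 <= A1 -> alpha + A1 <= 2 -> A1 <= 2 ->
  (forall y, y <> p -> Deg nbrs w mu y <= D * Rpower (INR (d y)) alpha) ->
  0 < C -> (forall s y, Itime T s -> y <> p -> Rabs (u s y) <= C * Rpower (INR (d y)) (A1 * INR (d y))) ->
  params D alpha A1 D' gam L ->
  Itime T t0 -> Itime T t ->
  (exists r k0, (0 <= r < 1) /\ forall k, (k0 <= k)%nat -> rhok (2 * D' * (t - t0)^2) (alpha + A1) (d x + L) k <= r) ->
  is_series (fun n => fn x n t0 / INR (fact n) * (t - t0) ^ n) (u t x).
Proof.
  intros HD Hal HA1 Hb HA2 Hdeg HC Hgr [HDD [Hg [HL [c1 [c2 c3]]]]] Ht0 Ht Hrho.
  destruct (bound_p t0 t Ht0 Ht) as [K0 [HK0 HK0b]].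
  set (K := Rmax C K0).
  assert (HKC : C <= K) by apply Rmax_l. assert (HKK0 : K0 <= K) by apply Rmax_r.
  set (H := fun m => K * H1f A1 m).
  set (a := Rmin t0 t). set (b := Rmax t0 t).
  assert (Ht0J : a <= t0 <= b) by (unfold a, b, Rmin, Rmax; repeat destruct Rle_dec; lra).
  assert (HtJ : a <= t <= b) by (unfold a, b, Rmin, Rmax; repeat destruct Rle_dec; lra).
  assert (HJ : forall s, a <= s <= b -> Itime T s) by (intros; apply (Itime_conv t0 t); auto).
  assert (HD' : 0 < D') by lra.
  set (Mp := Deg nbrs w mu p).
  set (Bk := fun k => Phi D' alpha gam L H k (d x)).
  assert (Hbound : forall k s, a <= s <= b -> Rabs (Nat.iter k Lp (u s) x) <= Bk k).
  { intros k s Hs. unfold Bk.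
    apply (Phi_bound V nbrs w mu p d Hsg Hwk Hd D' alpha gam Mp L H HD' Hal Hg HL)
      with (F := fun k y => Nat.iter k Lp (u s) y).
    - intros m. unfold H. pose proof (H1f_ge1 A1 m HA1). apply Rmult_le_pos; lra.
    - intros m m' Hm. unfold H. apply Rmult_le_compat_l. lra. apply H1f_mono; auto.
    - intros y Hy. eapply Rle_trans; [apply Hdeg; auto|]. apply Rmult_le_compat_r; auto.
      apply Rlt_le, Rpower_pos.
    - unfold Mp; lra.
    - intros m Hm. unfold H. specialize (c1 m Hm). replace (gam * (K * H1f A1 m)) with (K * (gam * H1f A1 m)) by ring.
      apply Rmult_le_compat_l; lra.
    - exact c2.
    - intros m Hm. unfold H. specialize (c3 m Hm).
      replace (Mp * (K * H1f A1 m)) with (K * (Mp * H1f A1 m)) by ring.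
      replace (D' * Rpower (INR (L + 1)) alpha * (K * H1f A1 (m + 1))) with (K * (D' * Rpower (INR (L + 1)) alpha * H1f A1 (m + 1))) by ring.
      apply Rmult_le_compat_l. lra. exact c3.
    - intros; reflexivity.
    - intros y. simpl. unfold H. destruct (classic (y = p)) as [->|Hy].
      + rewrite (d_p V nbrs p d Hd). assert (E : H1f A1 0 = 1) by (unfold H1f, Rpower; simpl; rewrite Rmult_0_r, Rmult_0_l, exp_0; reflexivity).
        rewrite E, Rmult_1_r. eapply Rle_trans; [apply HK0b; auto| auto].
      + eapply Rle_trans; [apply Hgr; auto|]. apply Rmult_le_compat_r; auto. apply Rlt_le, Rpower_pos. }
  assert (Htay : forall k, Rabs (u t x - TP (fun j => fn x j t0) t0 (2 * k) t) <= Bk k * Rabs (t - t0) ^ (2 * k) / INR (fact (2 * k))).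
  { intros k. change (u t x) with (fn x 0 t). apply (taylor a b t0 Ht0J (2 * k) (fn x) (Bk k)); auto.
    - intros j s _ Hs. eapply idw_sub; [|apply fn_deriv; auto]. intros; apply HJ; auto.
    - intros s Hs. rewrite fn_even. apply Hbound; auto. }
  set (h := t - t0) in *.
  set (q := 2 * D' * h ^ 2).
  set (e := ek (K * gam) q (alpha + A1) A1 (d x + L)).
  assert (Hek : forall k, Bk k * Rabs h ^ (2 * k) / INR (fact (2 * k)) <= e k).
  { intros k. unfold Bk, Phi, e, ek, q, H, H1f.
    replace (d x + k + L)%nat with (k + (d x + L))%nat by lia.
    set (m := INR (k + (d x + L))).
    assert (Em : m = INR k + INR (d x + L)) by (unfold m; apply plus_INR).
    assert (ER : Rpower m (alpha * INR k) * Rpower m (A1 * m) = Rpower m ((alpha + A1) * INR k + A1 * INR (d x + L))).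
    { rewrite <- Rpower_plus. f_equal. rewrite Em. ring. }
    rewrite pow_mult, pow2_abs, (Rpow_mult_distr (2 * D') (h ^ 2) k).
    set (G := if Nat.eqb (d x) 0 then gam else 1).
    assert (HG : 0 <= G <= gam) by (unfold G; destruct Nat.eqb; lra).
    rewrite <- ER.
    pose proof (Rpower_pos m (alpha * INR k)). pose proof (Rpower_pos m (A1 * m)).
    pose proof (pow_le (2 * D') k ltac:(lra)). pose proof (pow_le (h ^ 2) k (pow2_ge_0 h)).
    pose proof (INR_fact_lt_0 (2 * k)).
    assert (HK : 0 < K) by lra.
    set (P := (2 * D') ^ k) in *. set (Q := (h ^ 2) ^ k) in *.
    set (R1 := Rpower m (alpha * INR k)) in *. set (R2 := Rpower m (A1 * m)) in *.
    set (F := INR (fact (2 * k))) in *.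
    unfold Rdiv. apply Rmult_le_compat_r. apply Rlt_le, Rinv_0_lt_compat; auto.
    replace (P * R1 * (K * R2) * G * Q) with ((K * P * Q * R1 * R2) * G) by ring.
    replace (K * gam * (P * Q) * (R1 * R2)) with ((K * P * Q * R1 * R2) * gam) by ring.
    apply Rmult_le_compat_l; [|lra].
    repeat apply Rmult_le_pos; lra. }
  assert (Hen : forall k, 0 <= e k).
  { intros k. apply ek_nonneg. apply Rmult_le_pos; lra. unfold q. pose proof (pow2_ge_0 h). nra. }
  destruct Hrho as [r [k0 [Hr Hrk]]].
  assert (Hdec : forall k, (k0 <= k)%nat -> e (S k) <= e k * r).
  { intros k Hk. eapply Rle_trans. apply ek_ratio. apply Rmult_le_pos; lra. unfold q. pose proof (pow2_ge_0 h). nra.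
    lra. lra. lia. apply Rmult_le_compat_l; auto. }
  cut (is_lim_seq (sum_n (fun n => fn x n t0 / INR (fact n) * h ^ n)) (u t x)). { intros Hl. exact Hl. }
  apply is_lim_seq_spec.
  intros eps.
  destruct (geom_decay e r k0 Hr Hen Hdec (eps / 2)) as [N HN]. { pose proof (cond_pos eps). lra. }
  exists (2 * N)%nat. intros n Hn. unfold h. rewrite sum_TP. fold h.
  rewrite <- Rabs_Ropp. replace (- (TP (fun j => fn x j t0) t0 (S n) t - u t x)) with (u t x - TP (fun j => fn x j t0) t0 (S n) t) by ring.
  destruct (Nat.Even_or_Odd (S n)) as [[k Hk]|[k Hk]].
  - rewrite Hk. eapply Rle_lt_trans; [apply Htay|]. eapply Rle_lt_trans; [apply Hek|].
    eapply Rlt_le_trans; [apply HN; lia|]. pose proof (cond_pos eps). lra.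
  - rewrite Hk. replace (2 * k + 1)%nat with (S (2 * k)) by lia.
    change (TP (fun j => fn x j t0) t0 (S (2 * k)) t) with
      (TP (fun j => fn x j t0) t0 (2 * k) t + fn x (2 * k) t0 / INR (fact (2 * k)) * (t - t0) ^ (2 * k)).
    fold h.
    replace (u t x - (TP (fun j => fn x j t0) t0 (2 * k) t + fn x (2 * k) t0 / INR (fact (2 * k)) * h ^ (2 * k)))
      with ((u t x - TP (fun j => fn x j t0) t0 (2 * k) t) - fn x (2 * k) t0 / INR (fact (2 * k)) * h ^ (2 * k)) by ring.
    eapply Rle_lt_trans; [apply Rabs_triang|]. rewrite Rabs_Ropp.
    assert (A2 : Rabs (fn x (2 * k) t0 / INR (fact (2 * k)) * h ^ (2 * k)) <= Bk k * Rabs h ^ (2 * k) / INR (fact (2 * k))).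
    { rewrite fn_even. unfold Rdiv. rewrite !Rabs_mult, Rabs_inv, <- RPow_abs.
      rewrite (Rabs_right (INR (fact (2 * k)))) by (apply Rle_ge, pos_INR).
      pose proof (Hbound k t0 Ht0J). pose proof (pow_le (Rabs h) (2 * k) (Rabs_pos h)).
      pose proof (INR_fact_lt_0 (2 * k)).
      assert (0 <= / INR (fact (2 * k))) by (apply Rlt_le, Rinv_0_lt_compat; auto).
      pose proof (Rabs_pos (Nat.iter k Lp (u t0) x)).
      replace (Rabs (Nat.iter k Lp (u t0) x) * / INR (fact (2 * k)) * Rabs h ^ (2 * k)) with
        (Rabs (Nat.iter k Lp (u t0) x) * (Rabs h ^ (2 * k) * / INR (fact (2 * k)))) by ring.
      rewrite Rmult_assoc. apply Rmult_le_compat_r; auto. apply Rmult_le_pos; auto. }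
    pose proof (Htay k). fold h in H0.
    assert (e k < eps / 2) by (apply HN; lia).
    pose proof (Hek k). lra.
Qed.

Lemma Mp_nonneg : 0 <= Deg nbrs w mu p.
Proof. apply Deg_nonneg. intros y Hy. apply (weight_nonneg V nbrs w mu p y Hwk Hy). Qed.

Lemma params_exist D alpha A1 : 0 < D -> 0 <= alpha -> 0 <= A1 -> A1 <= 2 - alpha ->
  exists D' gam L, params D alpha A1 D' gam L /\ (A1 = 2 - alpha -> D' = D).
Proof.
  intros HD Hal HA HA2. pose proof Mp_nonneg as HMp. set (Mp := Deg nbrs w mu p) in *.
  destruct (Rle_lt_or_eq_dec 0 alpha Hal) as [Hapos|Ha0].
  - destruct (nat_above (exp (Mp / (D * alpha)))) as [n Hn].
    exists D, 1, (S n). split; [|auto].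
    assert (HR : Mp <= D * Rpower (INR (S n + 1)) alpha).
    { pose proof (exp_pos (Mp / (D * alpha))).
      assert (Hx : exp (Mp / (D * alpha)) <= INR (S n + 1)).
      { eapply Rle_trans; [apply Hn|]. apply le_INR; lia. }
      unfold Rpower.
      assert (Mp / (D * alpha) <= ln (INR (S n + 1))).
      { rewrite <- (ln_exp (Mp / (D * alpha))). apply ln_le; auto. }
      assert (Mp / D <= alpha * ln (INR (S n + 1))).
      { apply Rmult_le_reg_r with (/ alpha). apply Rinv_0_lt_compat; auto.
        replace (Mp / D * / alpha) with (Mp / (D * alpha)) by (field; lra).
        replace (alpha * ln (INR (S n + 1)) * / alpha) with (ln (INR (S n + 1))) by (field; lra). auto. }
      pose proof (exp_ineq1_le (alpha * ln (INR (S n + 1)))).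
      apply Rmult_le_reg_r with (/ D). apply Rinv_0_lt_compat; auto.
      replace (D * exp (alpha * ln (INR (S n + 1))) * / D) with (exp (alpha * ln (INR (S n + 1)))) by (field; lra).
      unfold Rdiv in *. lra. }
    unfold params; fold Mp. split; [lra|]. split; [lra|]. split; [lia|]. split.
    + intros m Hm. rewrite Rmult_1_l. apply H1f_mono; auto; lia.
    + split. lra. intros m Hm. pose proof (H1f_ge1 A1 m HA). pose proof (H1f_mono A1 m (m + 1) HA ltac:(lia)).
      apply Rmult_le_compat; lra.
  - subst alpha. rewrite Rminus_0_r in HA2.
    destruct (Rle_lt_or_eq_dec A1 2 HA2) as [HAl|HAe].
    + exists (Rmax D Mp), 1, 1%nat. split; [|intros; lra].
      unfold params; fold Mp. rewrite Rpower_0e.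
      assert (D <= Rmax D Mp) by apply Rmax_l. assert (Mp <= Rmax D Mp) by apply Rmax_r.
      split; [lra|]. split; [lra|]. split; [lia|]. split.
      * intros m Hm. rewrite Rmult_1_l. apply H1f_mono; auto; lia.
      * split. lra. intros m Hm. pose proof (H1f_ge1 A1 m HA). pose proof (H1f_mono A1 m (m + 1) HA ltac:(lia)).
        apply Rmult_le_compat; lra.
    + subst A1. set (gam := Rmax 1 (Mp / D)).
      assert (Hg1 : 1 <= gam) by apply Rmax_l. assert (Hg2 : Mp / D <= gam) by apply Rmax_r.
      destruct (nat_above gam) as [n Hn].
      exists D, gam, (S n). split; [|auto].
      unfold params; fold Mp. rewrite Rpower_0e.
      assert (Hgrow : forall m, (S n <= m)%nat -> gam * H1f 2 m <= H1f 2 (m + 1)).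
      { intros m Hm. eapply Rle_trans; [|apply H1f_growth; [lra|lia]].
        apply Rmult_le_compat_r. pose proof (H1f_ge1 2 m ltac:(lra)); lra.
        replace (Rpower (INR (m + 1)) 2) with (INR (m + 1) ^ 2)
          by (replace 2 with (INR 2) by (simpl; ring); rewrite Rpower_pow; [reflexivity| apply lt_0_INR; lia]).
        assert (INR (S n) <= INR (m + 1)) by (apply le_INR; lia).
        assert (1 <= INR (m + 1)) by (replace 1 with (INR 1) by reflexivity; apply le_INR; lia).
        rewrite S_INR in *. simpl. nra. }
      split; [lra|]. split; [lra|]. split; [lia|]. split.
      * intros m Hm. eapply Rle_trans; [apply Hgrow; auto|]. apply H1f_mono; [lra|lia].
      * split.
        { apply Rmult_le_reg_r with (/ D). apply Rinv_0_lt_compat; auto.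
          replace (D * gam * 1 * / D) with gam by (field; lra). unfold Rdiv in Hg2. lra. }
        intros m Hm. specialize (Hgrow m Hm). pose proof (H1f_ge1 2 m ltac:(lra)).
        assert (Mp <= D * gam).
        { apply Rmult_le_reg_r with (/ D). apply Rinv_0_lt_compat; auto.
          replace (D * gam * / D) with gam by (field; lra). unfold Rdiv in Hg2. lra. }
        rewrite Rmult_1_r.
        apply Rle_trans with (D * gam * H1f 2 m). apply Rmult_le_compat_r; lra.
        rewrite Rmult_assoc. apply Rmult_le_compat_l; lra.
Qed.

Lemma final_x D alpha A1 C x : 0 < D -> 0 <= alpha <= 2 ->
  (forall y, y <> p -> Deg nbrs w mu y <= D * Rpower (INR (d y)) alpha) ->
  0 < C -> 0 <= A1 <= 2 - alpha ->
  (forall s y, Itime T s -> y <> p -> Rabs (u s y) <= C * Rpower (INR (d y)) (A1 * INR (d y))) ->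
  (A1 < 2 - alpha -> analytic_radius (Itime T) (fun t => u t x) p_infty) /\
  (A1 = 2 - alpha -> analytic_radius (Itime T) (fun t => u t x) (Finite (/ exp 1 * sqrt (2 / D)))).
Proof.
  intros HD Hal Hdeg HC HA Hgr.
  destruct (params_exist D alpha A1 HD (proj1 Hal) (proj1 HA) (proj2 HA)) as [D' [gam [L [Hpar HDeq]]]].
  assert (HD' : 0 < D') by (destruct Hpar; lra).
  split; intros Hcase; exists (fn x); (split; [intros; reflexivity|]); (split; [intros; apply fn_deriv; auto|]);
    intros t0 t Ht0 Ht Hr; apply (core x t0 t D alpha A1 C D' gam L); auto; try lra.
  - apply rho_noncrit. pose proof (pow2_ge_0 (t - t0)). nra. lra.
  - rewrite HDeq by auto. replace (alpha + A1) with 2 by lra. apply rho_crit.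
    pose proof (pow2_ge_0 (t - t0)). nra.
    simpl in Hr. set (h := t - t0) in *.
    assert (Hs0 : 0 <= sqrt (2 / D)) by apply sqrt_pos.
    assert (He : 0 < exp 1) by apply exp_pos.
    assert (Hh : Rabs h * exp 1 < sqrt (2 / D)).
    { apply Rmult_lt_reg_r with (/ exp 1). apply Rinv_0_lt_compat; auto.
      replace (Rabs h * exp 1 * / exp 1) with (Rabs h) by (field; lra). lra. }
    assert (Hsq : (Rabs h * exp 1) ^ 2 < 2 / D).
    { rewrite <- (sqrt_sqrt (2 / D)) by (apply Rlt_le, Rdiv_lt_0_compat; lra).
      pose proof (Rabs_pos h). simpl. rewrite Rmult_1_r. apply Rmult_le_0_lt_compat; auto; apply Rmult_le_pos; lra. }
    replace (exp 2) with (exp 1 * exp 1) by (rewrite <- exp_plus; f_equal; ring).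
    rewrite <- pow2_abs with h.
    simpl in Hsq |- *.
    apply Rmult_lt_reg_r with (/ (2 * D)). apply Rinv_0_lt_compat; lra.
    replace (4 * / (2 * D)) with (2 / D) by (field; lra).
    replace (2 * D * (Rabs h * (Rabs h * 1)) * (exp 1 * exp 1) * / (2 * D)) with (Rabs h * exp 1 * (Rabs h * exp 1 * 1)) by (field; lra).
    exact Hsq.
Qed.

End Main.

Theorem theorem1p3 (V : Type) (nbrs : V -> list V) (w : V -> V -> R) (mu : V -> R)
  (p : V) (d : V -> nat) (D alpha : R) (T : Rbar) (u : R -> V -> R)
  (C A1 : R) :
  simple_graph nbrs -> connected nbrs -> weights_ok nbrs w mu ->
  is_dist_to nbrs p d ->
  0 < D -> 0 <= alpha <= 2 ->
  (forall x, x <> p -> Deg nbrs w mu x <= D * Rpower (INR (d x)) alpha) ->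
  Rbar_lt 0 T ->
  (exists u1 u2 : R -> V -> R,
     (forall x, C2_with (Itime T) (fun t => u t x) (fun t => u1 t x) (fun t => u2 t x)) /\
     (forall t x, Itime T t -> u2 t x = lap nbrs w mu (u t) x)) ->
  0 < C -> 0 <= A1 <= 2 - alpha ->
  (forall t x, Itime T t -> x <> p ->
     Rabs (u t x) <= C * Rpower (INR (d x)) (A1 * INR (d x))) ->
  forall x,
    (A1 < 2 - alpha -> analytic_radius (Itime T) (fun t => u t x) p_infty) /\
    (A1 = 2 - alpha ->
       analytic_radius (Itime T) (fun t => u t x) (Finite (/ exp 1 * sqrt (2 / D)))).
Proof.
  intros Hsg Hconn Hwk Hd HD Hal Hdeg HT [u1 [u2 [HC2 Hwave]]] HC HA Hgr x.
  eapply final_x; eauto.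
Qed.
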